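(* Let $P$ be a finite ranked poset with rank function $r$, let $P^*\subseteq P$ be a set of marked elements with $\min(P)\cup\max(P)\subseteq P^*$, and let $\lambda^r\colon P^*\to\mathbb{Z}$ be given by $\lambda^r(a)=r(a)$. Let $\mathbf{r}\in\mathbb{R}^{P\setminus P^*}$ be the point with coordinates $r_p=r(p)$. Then $\mathbf{r}$ is the unique interior lattice point of the marked order polytope $\mathcal{O}(P,\lambda^r)$, regarded as a subset of $\mathbb{R}^{P\setminus P^*}$.
   Context: A rank function on a poset $P$ is a map $r\colon P\to\mathbb{Z}$ with $r(p)=r(q)-1$ for every covering relation $p\prec q$; $P$ is ranked if it has one. The marked order polytope $\mathcal{O}(P,\lambda)$, for an order-preserving $\lambda\colon P^*\to\mathbb{R}$, is the set of $\mathbf{x}\in\mathbb{R}^P$ with $x_a=\lambda(a)$ for $a\in P^*$ and $x_p\le x_q$ for every covering relation $p\prec q$ in $P$; it is regarded as a subset of $\mathbb{R}^{P\setminus P^*}$ via projection onto the unmarked coordinates, and ''interior'' refers to the interior in $\mathbb{R}^{P\setminus P^*}$. A lattice point is a point of $\mathbb{Z}^{P\setminus P^*}$. *)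

(* Defs.v *)
From HB Require Import structures.
From mathcomp Require Import all_boot all_order all_algebra.
From mathcomp Require Import reals.
Set Implicit Arguments. Unset Strict Implicit. Unset Printing Implicit Defensive.
Import Order.TTheory GRing.Theory Num.Theory.
Local Open Scope ring_scope.

Section MarkedOrderPolytope.
Variables (d : Order.disp_t) (T : finPOrderType d).

Definition covers (p q : T) : bool :=
  (p < q)%O && [forall z : T, ~~ ((p < z)%O && (z < q)%O)].

Definition is_rank_function (r : T -> int) : Prop :=
  forall p q : T, covers p q -> r p = r q - 1.

Definition minimal_elt (p : T) : bool := [forall z : T, ~~ (z < p)%O].
Definition maximal_elt (p : T) : bool := [forall z : T, ~~ (p < z)%O].

Definition unmarked (Pstar : {set T}) := {p : T | p \notin Pstar}.

Variable R : realType.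

Definition extend (Pstar : {set T}) (lam : T -> R) (x : unmarked Pstar -> R)
  (p : T) : R :=
  match insub p with Some u => x u | None => lam p end.

Definition in_marked_order_polytope (Pstar : {set T}) (lam : T -> R)
  (x : unmarked Pstar -> R) : Prop :=
  forall p q : T, covers p q -> extend lam x p <= extend lam x q.

Definition in_interior (Pstar : {set T}) (lam : T -> R)
  (x : unmarked Pstar -> R) : Prop :=
  exists2 e : R, 0 < e &
    forall y : unmarked Pstar -> R,
      (forall u, `|y u - x u| < e) -> in_marked_order_polytope lam y.

Definition is_lattice_point (Pstar : {set T}) (x : unmarked Pstar -> R) : Prop :=
  forall u, exists z : int, x u = z%:~R.

End MarkedOrderPolytope.

(* Main.v *)
Require Import Defs.
From HB Require Import structures.
From mathcomp Require Import all_boot all_order all_algebra.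
From mathcomp Require Import reals.
From mathcomp Require Import zify ring lra.
Import Order.TTheory GRing.Theory Num.Theory.
Local Open Scope ring_scope.

Section Aux.
Variables (d : Order.disp_t) (T : finPOrderType d).

Lemma cover_below n : forall p q : T,
  (#|[set w | (p < w)%O && (w < q)%O]| <= n)%N -> (p < q)%O ->
  exists c, covers c q /\ (p <= c)%O.
Proof.
elim: n => [|n IH] p q Hc Hpq.
- case Hcov: (covers p q); first by exists p.
  move: Hcov; rewrite /covers Hpq /= => /forallPn [z]; rewrite negbK => Hz.
  have H0 : (0 < #|[set w | (p < w)%O && (w < q)%O]|)%N by apply/card_gt0P; exists z; rewrite inE.
  by move: Hc; rewrite leqn0 => /eqP E; rewrite E in H0.
- case Hcov: (covers p q); first by exists p.
  move: Hcov; rewrite /covers Hpq /= => /forallPn [z]; rewrite negbK => /andP [Hpz Hzq].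
  have Hlt : (#|[set w | (z < w)%O && (w < q)%O]| < #|[set w | (p < w)%O && (w < q)%O]|)%N.
    apply: proper_card; apply/properP; split.
      by apply/subsetP => w; rewrite !inE => /andP [H1 H2]; rewrite (lt_trans Hpz H1).
    by exists z; rewrite !inE ?Hpz ?Hzq ?ltxx.
  have [c [Hc1 Hc2]] := IH z q (leq_trans (leq_trans Hlt Hc) (leqnn _)) Hzq.
  by exists c; split => //; apply: le_trans (ltW Hpz) Hc2.
Qed.

Lemma cover_above n : forall p q : T,
  (#|[set w | (p < w)%O && (w < q)%O]| <= n)%N -> (p < q)%O ->
  exists c, covers p c /\ (c <= q)%O.
Proof.
elim: n => [|n IH] p q Hc Hpq.
- case Hcov: (covers p q); first by exists q.
  move: Hcov; rewrite /covers Hpq /= => /forallPn [z]; rewrite negbK => Hz.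
  have H0 : (0 < #|[set w | (p < w)%O && (w < q)%O]|)%N by apply/card_gt0P; exists z; rewrite inE.
  by move: Hc; rewrite leqn0 => /eqP E; rewrite E in H0.
- case Hcov: (covers p q); first by exists q.
  move: Hcov; rewrite /covers Hpq /= => /forallPn [z]; rewrite negbK => /andP [Hpz Hzq].
  have Hlt : (#|[set w | (p < w)%O && (w < z)%O]| < #|[set w | (p < w)%O && (w < q)%O]|)%N.
    apply: proper_card; apply/properP; split.
      by apply/subsetP => w; rewrite !inE => /andP [H1 H2]; rewrite H1 (lt_trans H2 Hzq).
    by exists z; rewrite !inE ?Hpz ?Hzq ?ltxx ?andbF.
  have [c [Hc1 Hc2]] := IH p z (leq_trans (leq_trans Hlt Hc) (leqnn _)) Hpz.
  by exists c; split => //; apply: le_trans Hc2 (ltW Hzq).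
Qed.

Variable R : realType.

Lemma f_nonneg (f : T -> R) :
  (forall p q, covers p q -> f p <= f q) ->
  (forall p, minimal_elt p -> f p = 0) ->
  forall n p, (#|[set z | (z < p)%O]| <= n)%N -> 0 <= f p.
Proof.
move=> Hmono Hmin; elim=> [|n IH] p Hc.
- case Hm: (minimal_elt p); first by rewrite Hmin.
  move: Hm; rewrite /minimal_elt => /forallPn [z]; rewrite negbK => Hz.
  have H0 : (0 < #|[set z | (z < p)%O]|)%N by apply/card_gt0P; exists z; rewrite inE.
  by move: Hc; rewrite leqn0 => /eqP E; rewrite E in H0.
- case Hm: (minimal_elt p); first by rewrite Hmin.
  move: Hm; rewrite /minimal_elt => /forallPn [z]; rewrite negbK => Hz.
  have [c [Hc1 _]] := cover_below _ _ _ (leqnn _) Hz.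
  have Hcp : (c < p)%O by case/andP: Hc1.
  have Hlt : (#|[set w | (w < c)%O]| < #|[set w | (w < p)%O]|)%N.
    apply: proper_card; apply/properP; split.
      by apply/subsetP => w; rewrite !inE => H1; rewrite (lt_trans H1 Hcp).
    by exists c; rewrite !inE ?Hcp ?ltxx.
  apply: le_trans (IH c _) (Hmono _ _ Hc1).
  by rewrite -ltnS; apply: leq_trans Hlt Hc.
Qed.

Lemma f_nonpos (f : T -> R) :
  (forall p q, covers p q -> f p <= f q) ->
  (forall p, maximal_elt p -> f p = 0) ->
  forall n p, (#|[set z | (p < z)%O]| <= n)%N -> f p <= 0.
Proof.
move=> Hmono Hmax; elim=> [|n IH] p Hc.
- case Hm: (maximal_elt p); first by rewrite Hmax.
  move: Hm; rewrite /maximal_elt => /forallPn [z]; rewrite negbK => Hz.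
  have H0 : (0 < #|[set z | (p < z)%O]|)%N by apply/card_gt0P; exists z; rewrite inE.
  by move: Hc; rewrite leqn0 => /eqP E; rewrite E in H0.
- case Hm: (maximal_elt p); first by rewrite Hmax.
  move: Hm; rewrite /maximal_elt => /forallPn [z]; rewrite negbK => Hz.
  have [c [Hc1 _]] := cover_above _ _ _ (leqnn _) Hz.
  have Hcp : (p < c)%O by case/andP: Hc1.
  have Hlt : (#|[set w | (c < w)%O]| < #|[set w | (p < w)%O]|)%N.
    apply: proper_card; apply/properP; split.
      by apply/subsetP => w; rewrite !inE => H1; rewrite (lt_trans Hcp H1).
    by exists c; rewrite !inE ?Hcp ?ltxx.
  apply: le_trans (Hmono _ _ Hc1) (IH c _).
  by rewrite -ltnS; apply: leq_trans Hlt Hc.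
Qed.

Lemma ext_case (Pstar : {set T}) (lam : T -> R) (y : unmarked Pstar -> R) p :
  (p \in Pstar /\ extend lam y p = lam p) \/
  (exists2 u : unmarked Pstar, val u = p & extend lam y p = y u).
Proof.
rewrite /extend; case: insubP => [u Hu <-|Hu]; first by right; exists u.
by left; split => //; move: Hu; rewrite negbK.
Qed.

Lemma ext_m (Pstar : {set T}) (lam : T -> R) (y : unmarked Pstar -> R) p :
  p \in Pstar -> extend lam y p = lam p.
Proof.
by move=> Hp; rewrite /extend insubF // Hp.
Qed.

Lemma ext_u (Pstar : {set T}) (lam : T -> R) p (Hp : p \notin Pstar) :
  forall (y : unmarked Pstar -> R), extend lam y p = y (Sub p Hp).
Proof.
by move=> y; rewrite /extend insubT.
Qed.

End Aux.

Arguments ext_u {d T R Pstar lam p} Hp y.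
Arguments ext_m {d T R Pstar lam y p}.
Arguments f_nonneg {d T R f}.
Arguments f_nonpos {d T R f}.

Theorem proposition3p1 (d : Order.disp_t) (T : finPOrderType d) (R : realType)
  (r : T -> int) (Pstar : {set T}) :
  is_rank_function r ->
  (forall p : T, minimal_elt p -> p \in Pstar) ->
  (forall p : T, maximal_elt p -> p \in Pstar) ->
  forall x : unmarked Pstar -> R,
    (is_lattice_point x /\ in_interior (fun a => (r a)%:~R) x) <->
    (forall u : unmarked Pstar, x u = (r (val u))%:~R).
Proof.
move=> Hrank Hmin Hmax x; set lam := (fun a => (r a)%:~R : R); split.
- case=> Hlat [e He Hint].
  have Hstrict : forall p q, covers p q -> extend lam x p < extend lam x q.
    move=> p q Hpq.
    have Hne : p != q by case/andP: Hpq => H _; rewrite lt_eqF.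
    pose y := fun u : unmarked Pstar =>
      x u + (if val u == p then e / 3 else 0) - (if val u == q then e / 3 else 0).
    have Hy : forall u, `|y u - x u| < e.
      move=> u; rewrite /y.
      have -> : x u + (if val u == p then e / 3 else 0) - (if val u == q then e / 3 else 0) - x u
        = (if val u == p then e / 3 else 0) + - (if val u == q then e / 3 else 0) by ring.
      apply: le_lt_trans (ler_normD _ _) _; rewrite normrN.
      have H1 : `|(if val u == p then e / 3 else 0)| <= e / 3.
        by case: ifP => _; rewrite ?normr0 ?ger0_norm //; lra.
      have H2 : `|(if val u == q then e / 3 else 0)| <= e / 3.
        by case: ifP => _; rewrite ?normr0 ?ger0_norm //; lra.
      lra.
    have := Hint y Hy p q Hpq.
    case: (boolP (p \in Pstar)) => Hp; case: (boolP (q \in Pstar)) => Hq.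
    + rewrite (ext_m Hp) (ext_m Hq) (ext_m Hp) (ext_m Hq) /lam => _.
      rewrite ltr_int (Hrank _ _ Hpq); lia.
    + have Hqp : (q == p) = false by rewrite eq_sym (negbTE Hne).
      rewrite (ext_m Hp) (ext_m Hp) (ext_u Hq) (ext_u Hq x) /y /= eqxx Hqp; lra.
    + rewrite (ext_m Hq) (ext_m Hq) (ext_u Hp) (ext_u Hp x) /y /= eqxx (negbTE Hne); lra.
    + have Hqp : (q == p) = false by rewrite eq_sym (negbTE Hne).
      rewrite (ext_u Hq) (ext_u Hq x) (ext_u Hp) (ext_u Hp x) /y /= !eqxx (negbTE Hne) Hqp; lra.
  have Hint_ext : forall p, exists z : int, extend lam x p = z%:~R.
    move=> p; case: (boolP (p \in Pstar)) => Hp.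
      by exists (r p); rewrite ext_m.
    by rewrite (ext_u Hp); apply: Hlat.
  pose f := fun p => extend lam x p - (r p)%:~R.
  have Hmono : forall p q, covers p q -> f p <= f q.
    move=> p q Hpq; have := Hstrict _ _ Hpq; rewrite /f.
    have [a ->] := Hint_ext p; have [b ->] := Hint_ext q.
    rewrite ltr_int => Hab.
    have Hab' : ((a + 1)%:~R <= b%:~R :> R) by rewrite ler_int; lia.
    have Hr : ((r p)%:~R = (r q)%:~R - 1 :> R) by rewrite (Hrank _ _ Hpq) rmorphB.
    rewrite rmorphD /= in Hab'; lra.
  have Hf0 : forall p, p \in Pstar -> f p = 0.
    by move=> p Hp; rewrite /f ext_m // /lam subrr.
  move=> u; have Hu := valP u.
  have Hge := f_nonneg Hmono (fun p Hp => Hf0 p (Hmin p Hp)) _ _ (leqnn _).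
  have Hle := f_nonpos Hmono (fun p Hp => Hf0 p (Hmax p Hp)) _ _ (leqnn _).
  have : f (val u) = 0 by apply/eqP; rewrite eq_le Hle Hge.
  rewrite /f (ext_u Hu).
  have -> : (Sub (val u) Hu : unmarked Pstar) = u by apply: val_inj.
  by move/eqP; rewrite subr_eq0 => /eqP.
- move=> Hx; split; first by move=> u; exists (r (val u)).
  exists (1 / 2); first lra.
  move=> y Hy p q Hpq.
  have Hr : ((r p)%:~R = (r q)%:~R - 1 :> R) by rewrite (Hrank _ _ Hpq) rmorphB.
  have Hp' : extend lam y p <= (r p)%:~R + 1 / 2.
    case: (boolP (p \in Pstar)) => Hp; first by rewrite ext_m // /lam; lra.
    rewrite ext_u; have := Hy (Sub p Hp); rewrite Hx /=.
    by case/ltr_normlP => H1 H2; lra.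
  have Hq' : (r q)%:~R - 1 / 2 <= extend lam y q.
    case: (boolP (q \in Pstar)) => Hq; first by rewrite ext_m // /lam; lra.
    rewrite ext_u; have := Hy (Sub q Hq); rewrite Hx /=.
    by case/ltr_normlP => H1 H2; lra.
  lra.
Qed.
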